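(* Let $q$ be a prime power and $\mathcal{L}$ a non-empty set of lines of $\mathrm{PG}(n,q)$ satisfying (Pt), (Pl), (Sd) and (To) (see context). Let $M$ be a $4$-dimensional subspace of $\mathrm{PG}(n,q)$ and let $P$ be a $(q+1)$-$M$-point. Then one of the following holds: (a) every line through $P$ in the plane $\pi_P$ contains exactly one $(q+1)$-$M$-point other than $P$; (b) there exists a line through $P$ in $\pi_P$ containing no $(q+1)$-$M$-point other than $P$.
   Context: (Pt): every point of $\mathrm{PG}(n,q)$ lies on $0$ or $q+1$ lines of $\mathcal{L}$. (Pl): every plane contains $0$, $1$ or $q+1$ lines of $\mathcal{L}$. (Sd): every solid ($3$-dimensional subspace) contains $0$, $1$, $q+1$ or $2q+1$ lines of $\mathcal{L}$. (To): $|\mathcal{L}|\le q^5+q^4+q^3+q^2+q+1$. A point $X$ is a $(q+1)$-$M$-point if exactly $q+1$ lines of $\mathcal{L}$ pass through $X$ and are contained in $M$. For a point $P$ lying on lines of $\mathcal{L}$, $\pi_P$ denotes the subspace spanned by the $q+1$ lines of $\mathcal{L}$ through $P$ (under these hypotheses this is a plane). *)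

(* Defs.v *)
(* PG(n,q) is modelled as the lattice of subspaces of the
   vector space 'rV[F]_(n.+1) over a finite field F with q = #|F|.
   Projective dimension d <-> vector dimension d+1:
   points: \dim = 1, lines: 2, planes: 3, solids: 4, 4-dim subspaces: 5. *)
From HB Require Import structures.
From mathcomp Require Import all_boot all_algebra.
Set Implicit Arguments. Unset Strict Implicit. Unset Printing Implicit Defensive.

Section PG.
Variables (F : fieldType) (vT : vectType F).

(* The line set L is a duplicate-free list of subspaces. *)

Definition nlines_in (L : seq {vspace vT}) (U : {vspace vT}) : nat :=
  count (fun l => (l <= U)%VS) L.

Definition nlines_through (L : seq {vspace vT}) (X : {vspace vT}) : nat :=
  count (fun l => (X <= l)%VS) L.

Definition qM_point (q : nat) (L : seq {vspace vT}) (M X : {vspace vT}) : Prop :=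
  \dim X = 1%N /\ count (fun l => (X <= l)%VS && (l <= M)%VS) L = q.+1.

(* pi_P: the subspace spanned by the lines of L through P *)
Definition span_lines_through (L : seq {vspace vT}) (P : {vspace vT}) : {vspace vT} :=
  (\sum_(l <- L | (P <= l)%VS) l)%VS.

End PG.

(* Main.v *)
Require Import Defs.
From HB Require Import structures.
From mathcomp Require Import all_boot all_algebra all_field zify.
From Stdlib Require Import ClassicalEpsilon Classical.
Set Implicit Arguments. Unset Strict Implicit. Unset Printing Implicit Defensive.

Lemma subv_eq_dim {F : fieldType} {vT : vectType F} (U V : {vspace vT}) :
  (U <= V)%VS -> \dim V <= \dim U -> U = V.
Proof. by move=> sUV dVU; apply/eqP; rewrite eqEdim sUV. Qed.

Lemma dim_cap_lt {F : fieldType} {vT : vectType F} (U V : {vspace vT}) :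
  \dim U = \dim V -> U != V -> \dim (U :&: V) < \dim U.
Proof.
move=> dUV nUV; rewrite ltn_neqAle dimvS ?capvSl // andbT.
apply/negP=> /eqP E; move/negP: nUV; apply; apply/eqP.
have e1: (U :&: V)%VS = U by apply: subv_eq_dim; rewrite ?capvSl ?E.
apply: subv_eq_dim; last by rewrite dUV.
by rewrite -e1 capvSr.
Qed.

Lemma I2 {F : fieldType} {vT : vectType F} (C U U' : {vspace vT}) :
  (C <= U)%VS -> (C <= U')%VS -> \dim U = (\dim C).+1 -> \dim U' = (\dim C).+1 ->
  U != U' -> (U :&: U')%VS = C.
Proof.
move=> sCU sCU' dU dU' nU.
have sC: (C <= U :&: U')%VS by rewrite subv_cap sCU sCU'.
have := dim_cap_lt (etrans dU (esym dU')) nU; rewrite dU ltnS => h.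
by apply/esym/subv_eq_dim.
Qed.

Lemma dim_sum_eq {F : fieldType} {vT : vectType F} (U V : {vspace vT}) c :
  \dim (U :&: V) = c -> \dim (U + V) = (\dim U + \dim V - c)%N.
Proof. move=> h; have := dimv_sum_cap U V; rewrite h; lia. Qed.

Lemma vec_out {F : fieldType} {vT : vectType F} (U V : {vspace vT}) :
  \dim V < \dim U -> exists2 v, v \in U & v \notin V.
Proof.
move=> h; apply/subvPn; apply/negP=> s.
by have := dimvS s; rewrite leqNgt h.
Qed.

Lemma cap_point {F : fieldType} {vT : vectType F} (X U : {vspace vT}) :
  \dim X = 1%N -> (X <= U)%VS \/ (X :&: U = 0)%VS.
Proof.
move=> dX; have := dimvS (capvSl X U); rewrite dX.
case e: (\dim (X :&: U)) => [|[|k]] //= _.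
  by right; apply/eqP; rewrite -dimv_eq0 e.
left; have := @subv_eq_dim _ _ (X :&: U) X (capvSl _ _); rewrite dX e => h.
by rewrite -(h (leqnn 1)) capvSr.
Qed.

Lemma count_split {T : Type} (p r : pred T) s :
  count p s = (count (fun x => p x && r x) s + count (fun x => p x && ~~ r x) s)%N.
Proof. elim: s => //= x s ->; case: (p x); case: (r x) => /=; lia. Qed.

Lemma count3 {T : Type} (a b c : pred T) s :
  (count a s + count b s + count c s <=
   count (fun x => [|| a x, b x | c x]) s + count (fun x => a x && b x) s
   + count (fun x => a x && c x) s + count (fun x => b x && c x) s)%N.
Proof. elim: s => //= x s IH; case: (a x); case: (b x); case: (c x) => /=; lia. Qed.

Lemma count2 {T : eqType} (p : pred T) s x y :
  uniq s -> x \in s -> y \in s -> x != y -> p x -> p y -> (2 <= count p s)%N.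
Proof.
move=> us xs ys nxy px py.
have h: (count (predU (pred1 x) (pred1 y)) s <= count p s)%N.
  by apply: sub_count => z /= /orP[] /eqP->.
have := count_predUI (pred1 x) (pred1 y) s.
rewrite !count_uniq_mem // xs ys.
have -> : count (predI (pred1 x) (pred1 y)) s = 0%N.
  apply/eqP; rewrite -leqn0 -(count_pred0 s); apply: sub_count => z /= /andP[/eqP-> /eqP e].
  by rewrite e eqxx in nxy.
lia.
Qed.

Lemma count1 {F : fieldType} {vT : vectType F} (L : seq {vspace vT}) (U : {vspace vT}) :
  uniq L -> (forall l, l \in L -> \dim l = 2%N) -> (\dim U <= 2)%N ->
  (count (fun l => (l <= U)%VS) L <= 1)%N.
Proof.
move=> uL dL dU.
rewrite (@eq_in_count _ _ (pred1 U)); first by rewrite count_uniq_mem // leq_b1.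
move=> l lL /=; apply/idP/eqP => [s|->]; last exact: subvv.
by apply: subv_eq_dim => //; rewrite (dL l lL).
Qed.

Lemma K3 {F : fieldType} {vT : vectType F} (L : seq {vspace vT}) q (A B C S : {vspace vT}) :
  uniq L -> (forall l, l \in L -> \dim l = 2%N) ->
  (forall S : {vspace vT}, \dim S = 4%N ->
     [\/ nlines_in L S = 0%N, nlines_in L S = 1%N, nlines_in L S = q.+1
       | nlines_in L S = (2 * q).+1]) ->
  (1 < q)%N ->
  \dim A = 3%N -> \dim B = 3%N -> \dim C = 3%N -> \dim S = 4%N ->
  nlines_in L A = q.+1 -> nlines_in L B = q.+1 -> nlines_in L C = q.+1 ->
  A != B -> A != C -> B != C ->
  (A <= S)%VS -> (B <= S)%VS -> (C <= S)%VS -> False.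
Proof.
move=> uL dL Sd q1 dA dB dC dS cA cB cC nAB nAC nBC sA sB sC.
have c2 U V : \dim U = 3%N -> \dim V = 3%N -> U != V ->
    (count (fun l => (l <= U)%VS && (l <= V)%VS) L <= 1)%N.
  move=> dU dV nUV.
  apply: leq_trans (count1 (U := (U :&: V)%VS) uL dL _).
    by apply: sub_count => l /=; rewrite subv_cap.
  have := dim_cap_lt (etrans dU (esym dV)) nUV; rewrite dU; lia.
have h := count3 (fun l => (l <= A)%VS) (fun l => (l <= B)%VS) (fun l => (l <= C)%VS) L.
have hS : (count (fun l => [|| (l <= A)%VS, (l <= B)%VS | (l <= C)%VS]) L <= nlines_in L S)%N.
  apply: sub_count => l /= /or3P[] s; [exact: subv_trans s sA|exact: subv_trans s sB|exact: subv_trans s sC].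
have := c2 _ _ dA dB nAB; have := c2 _ _ dA dC nAC; have := c2 _ _ dB dC nBC.
have hSd := Sd S dS.
move: cA cB cC h hS hSd; rewrite /nlines_in => -> -> -> h hS.
case=> e; rewrite e in hS; lia.
Qed.

Definition vs {F : finFieldType} {n : nat} (U : {vspace 'rV[F]_(n.+1)}) : {set 'rV[F]_(n.+1)} :=
  [set v | v \in U].

Lemma cardV {F : finFieldType} {n : nat} (U : {vspace 'rV[F]_(n.+1)}) :
  #|vs U| = (#|F| ^ \dim U)%N.
Proof. rewrite -card_vspace. by apply: eq_card => v; rewrite inE. Qed.



Lemma union_bound (F : finFieldType) n (C W : {vspace 'rV[F]_(n.+1)})
   (s : seq {vspace 'rV[F]_(n.+1)}) d :
  (C <= W)%VS ->
  (forall U, U \in s -> [/\ (C <= U)%VS, (U <= W)%VS & \dim U = d]) ->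
  pairwise (fun U U' => (U :&: U' <= C)%VS) s ->
  (#|F| ^ \dim C + size s * (#|F| ^ d - #|F| ^ \dim C) <= #|F| ^ \dim W)%N.
Proof.
move=> sCW hs ps.
pose D U := vs U :\: vs C.
pose B s := vs C :|: \bigcup_(U <- s) D U.
suff [e1 e2] : #|B s| = (#|F| ^ \dim C + size s * (#|F| ^ d - #|F| ^ \dim C))%N
               /\ B s \subset vs W.
  by rewrite -e1 -cardV; apply: subset_leq_card.
elim: s hs ps => [|U s IH] hs ps.
  rewrite /B big_nil setU0 cardV mul0n addn0; split => //.
  by apply/subsetP => v; rewrite /vs !inE; apply: (subvP sCW).
have [sCU sUW dU] := hs U (mem_head _ _).
have hs' : forall U, U \in s -> [/\ (C <= U)%VS, (U <= W)%VS & \dim U = d].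
  by move=> U' U's; apply: hs; rewrite inE U's orbT.
move: ps => /= /andP[aU ps].
have [IH1 IH2] := IH hs' ps.
have eB : B (U :: s) = D U :|: B s.
  by rewrite /B big_cons setUCA.
have inB v : v \in B s -> v \notin vs C -> exists2 U', U' \in s & v \in U'.
  rewrite /B inE => /orP[-> //|]; elim: (s) => [|U0 s0 IH0]; first by rewrite big_nil inE.
  rewrite big_cons inE => /orP[|/IH0 h /h [U' U's vU']]; last first.
    by exists U' => //; rewrite inE U's orbT.
  by rewrite /D !inE => /andP[_ vU0] _; exists U0; rewrite ?mem_head.
have disj : D U :&: B s = set0.
  apply/setP => v; rewrite inE [in RHS]inE; apply/negP => /andP[].
  rewrite /D inE => /andP[vC vU] /inB [] // U' U's vU'.
  move: vC; rewrite inE; apply/negP/negPn.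
  move/allP: aU => /(_ U' U's) /subvP; apply.
  by move: vU; rewrite /vs inE memv_cap => ->.
split.
  rewrite eB cardsU disj cards0 subn0 IH1 /D cardsD.
  have -> : vs U :&: vs C = vs C.
    by apply/setIidPr/subsetP => v; rewrite /vs !inE; apply: (subvP sCU).
  rewrite !cardV dU /= mulSn; set k := (_ - _)%N; set b := (_ ^ \dim C)%N; lia.
rewrite eB subUset IH2 andbT /D.
apply/subsetP => v; rewrite /vs !inE => /andP[_]; apply: (subvP sUW).
Qed.

Lemma count_rev_incl {T : eqType} (p r : pred T) s :
  {in s, forall x, p x -> r x} -> (count r s <= count p s)%N ->
  {in s, forall x, r x -> p x}.
Proof.
move=> hpr hc.
have e: count (fun x => r x && p x) s = count p s.
  by apply: eq_in_count => x xs /=; case px: (p x); rewrite ?andbF ?andbT ?hpr.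
have := count_split r p s; rewrite e => e2.
have h0 : ~~ has (fun x => r x && ~~ p x) s by rewrite has_count; lia.
move=> x xs rx; apply/negPn/negP => npx.
by move/hasPn: h0 => /(_ x xs); rewrite rx npx.
Qed.

Lemma plane_of2 {F : fieldType} {vT : vectType F} (L : seq {vspace vT}) q (Z l1 l2 : {vspace vT}) :
  uniq L -> (forall l, l \in L -> \dim l = 2%N) ->
  (forall E : {vspace vT}, \dim E = 3%N ->
     [\/ nlines_in L E = 0%N, nlines_in L E = 1%N | nlines_in L E = q.+1]) ->
  \dim Z = 1%N -> l1 \in L -> l2 \in L -> (Z <= l1)%VS -> (Z <= l2)%VS -> l1 != l2 ->
  \dim (l1 + l2) = 3%N /\ nlines_in L (l1 + l2) = q.+1.
Proof.
move=> uL dL Pl dZ l1L l2L Z1 Z2 n12.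
have ec : (l1 :&: l2)%VS = Z by apply: I2 => //; rewrite ?(dL l1 l1L) ?(dL l2 l2L) dZ.
have d3 : \dim (l1 + l2) = 3%N by rewrite (dim_sum_eq (c := 1)) ?ec ?dZ ?(dL l1 l1L) ?(dL l2 l2L).
split => //.
have c2 : (2 <= nlines_in L (l1 + l2))%N.
  by apply: (count2 uL l1L l2L n12); rewrite /= ?addvSl ?addvSr.
by case: (Pl _ d3) => e; move: c2; rewrite e.
Qed.

Lemma plane_lemma {F : fieldType} {vT : vectType F} (L : seq {vspace vT}) q (Z : {vspace vT}) :
  uniq L -> (forall l, l \in L -> \dim l = 2%N) ->
  (forall E : {vspace vT}, \dim E = 3%N ->
     [\/ nlines_in L E = 0%N, nlines_in L E = 1%N | nlines_in L E = q.+1]) ->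
  (forall S : {vspace vT}, \dim S = 4%N ->
     [\/ nlines_in L S = 0%N, nlines_in L S = 1%N, nlines_in L S = q.+1
       | nlines_in L S = (2 * q).+1]) ->
  (1 < q)%N ->
  \dim Z = 1%N -> nlines_through L Z = q.+1 ->
  exists E : {vspace vT}, [/\ \dim E = 3%N, nlines_in L E = q.+1,
     (forall l, l \in L -> (Z <= l)%VS -> (l <= E)%VS),
     (forall l, l \in L -> (l <= E)%VS -> (Z <= l)%VS) &
     (forall U, (forall l, l \in L -> (Z <= l)%VS -> (l <= U)%VS) -> (E <= U)%VS)].
Proof.
move=> uL dL Pl Sd q1 dZ cZ.
have sz : size (filter (fun l => (Z <= l)%VS) L) = q.+1 by rewrite size_filter.
have uf := filter_uniq (fun l => (Z <= l)%VS) uL.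
have [l1 [l2 [s' ef]]] : exists l1 l2 s', filter (fun l => (Z <= l)%VS) L = [:: l1, l2 & s'].
  move: sz; case: (filter _ L) => [|a [|b t]] /= h; try lia.
  by exists a, b, t.
move: uf; rewrite ef /= => /andP [hn _].
move: hn; rewrite inE negb_or => /andP[n12 _].
have m1 : l1 \in filter (fun l => (Z <= l)%VS) L by rewrite ef mem_head.
have m2 : l2 \in filter (fun l => (Z <= l)%VS) L by rewrite ef !inE eqxx orbT.
move: m1 m2; rewrite !mem_filter => /andP[Z1 l1L] /andP[Z2 l2L].
have [dE cE] := plane_of2 uL dL Pl dZ l1L l2L Z1 Z2 n12.
set E := (l1 + l2)%VS in dE cE.
have allin : forall l, l \in L -> (Z <= l)%VS -> (l <= E)%VS.
  move=> l3 l3L Z3; apply/negPn/negP => nE.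
  have n13 : l1 != l3 by apply/eqP => e; rewrite -e addvSl in nE.
  have n23 : l2 != l3 by apply/eqP => e; rewrite -e addvSr in nE.
  have [dB cB] := plane_of2 uL dL Pl dZ l1L l3L Z1 Z3 n13.
  have [dC cC] := plane_of2 uL dL Pl dZ l2L l3L Z2 Z3 n23.
  have nAB : E != (l1 + l3)%VS by apply/eqP => e; rewrite e addvSr in nE.
  have nAC : E != (l2 + l3)%VS by apply/eqP => e; rewrite e addvSr in nE.
  have nBC : (l1 + l3)%VS != (l2 + l3)%VS.
    apply/eqP => e; move/eqP: nAB; apply.
    apply: subv_eq_dim; last by rewrite dE dB.
    by rewrite subv_add addvSl e addvSl.
  have dI : \dim (E :&: l3) = 1%N.
    have h1 : (1 <= \dim (E :&: l3))%N.
      by rewrite -dZ dimvS // subv_cap Z3 (subv_trans Z1) ?addvSl.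
    have h2 := dimvS (capvSr E l3); rewrite (dL l3 l3L) in h2.
    suff : \dim (E :&: l3) != 2%N by lia.
    apply/eqP => e; move: nE; rewrite -(@subv_eq_dim _ _ (E :&: l3) l3) ?capvSl ?capvSr //.
    by rewrite e (dL l3 l3L).
  have dS : \dim (E + l3) = 4%N by rewrite (dim_sum_eq dI) dE dL.
  apply: (K3 uL dL Sd q1 dE dB dC dS cE cB cC nAB nAC nBC).
  - exact: addvSl.
  - by apply: addvS => //; rewrite addvSl.
  - by apply: addvS => //; rewrite addvSr.
exists E; split => //.
- apply: count_rev_incl => //; rewrite -/(nlines_in L E) cE.
  by rewrite -/(nlines_through L Z) cZ.
- by move=> U hU; rewrite subv_add !hU.
Qed.

Lemma count_sub_in {T : eqType} (p r : pred T) s :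
  {in s, forall x, p x -> r x} -> (count p s <= count r s)%N.
Proof.
elim: s => //= x s IH h.
have h' : {in s, forall x, p x -> r x} by move=> y ys; apply: h; rewrite inE ys orbT.
have := IH h'; have := h x (mem_head _ _); case: (p x); case: (r x) => /=; try lia; move=> H; by have := H isT.
Qed.

Lemma pw_of_uniq {T : eqType} (r : rel T) s :
  uniq s -> (forall x y, x \in s -> y \in s -> x != y -> r x y) -> pairwise r s.
Proof.
elim: s => //= x s IH /andP[xs us] h; apply/andP; split.
  apply/allP => y ys; apply: h; rewrite ?mem_head ?inE ?ys ?orbT //.
  by apply/eqP => e; rewrite e ys in xs.
by apply: IH => // a b ass bs; apply: h; rewrite inE ?ass ?bs orbT.
Qed.

Lemma dim_pts {F : fieldType} {vT : vectType F} (Z Z' : {vspace vT}) :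
  \dim Z = 1%N -> \dim Z' = 1%N -> Z != Z' -> \dim (Z + Z') = 2%N.
Proof.
move=> d1 d2 n; have e : (Z :&: Z')%VS = 0%VS.
  by apply: I2; rewrite ?sub0v ?dimv0.
by rewrite (dim_sum_eq (c := 0)) ?e ?dimv0 ?d1 ?d2.
Qed.

Lemma DP {F : fieldType} {vT : vectType F} (L : seq {vspace vT}) q (Z Z' E : {vspace vT}) :
  uniq L -> (forall l, l \in L -> \dim l = 2%N) ->
  \dim Z = 1%N -> \dim Z' = 1%N -> Z != Z' -> nlines_through L Z = q.+1 -> (0 < q)%N ->
  (forall l, l \in L -> (Z <= l)%VS -> (l <= E)%VS) ->
  (forall l, l \in L -> (l <= E)%VS -> (Z' <= l)%VS) -> False.
Proof.
move=> uL dL d1 d2 n cZ q0 h1 h2.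
have d := dim_pts d1 d2 n.
have : (nlines_through L Z <= 1)%N.
  apply: leq_trans (count1 (U := (Z + Z')%VS) uL dL _); last by rewrite d.
  apply: count_sub_in => l lL /= Zl.
  have s : (Z + Z' <= l)%VS by rewrite subv_add Zl h2 ?h1.
  by rewrite -(subv_eq_dim s) ?subvv // d (dL l lL).
rewrite cZ; lia.
Qed.

Lemma qM_full {F : fieldType} {vT : vectType F} (L : seq {vspace vT}) q (M Z : {vspace vT}) :
  (forall X : {vspace vT}, \dim X = 1%N ->
     nlines_through L X = 0%N \/ nlines_through L X = q.+1) ->
  qM_point q L M Z ->
  nlines_through L Z = q.+1 /\ (forall l, l \in L -> (Z <= l)%VS -> (l <= M)%VS).
Proof.
move=> Pt [dZ cZ].
have hle : (count (fun l => (Z <= l)%VS && (l <= M)%VS) L <= nlines_through L Z)%N.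
  by apply: sub_count => l /andP[].
have cT : nlines_through L Z = q.+1 by case: (Pt Z dZ) => e; rewrite e in hle; lia.
split => // l lL Zl.
have := @count_rev_incl _ (fun l => (Z <= l)%VS && (l <= M)%VS) (fun l => (Z <= l)%VS) L.
move=> /(_ _ _ l lL Zl) /andP[] //.
  by move=> x _ /andP[].
by rewrite -/(nlines_through L Z) cT cZ.
Qed.

Lemma cover_lines (F : finFieldType) n (L : seq {vspace 'rV[F]_(n.+1)}) (P E : {vspace 'rV[F]_(n.+1)}) :
  uniq L -> (forall l, l \in L -> \dim l = 2%N) -> (1 < #|F|)%N ->
  \dim P = 1%N -> \dim E = 3%N -> nlines_through L P = (#|F|).+1 ->
  (forall l, l \in L -> (P <= l)%VS -> (l <= E)%VS) ->
  forall l, \dim l = 2%N -> (P <= l)%VS -> (l <= E)%VS -> l \in L.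
Proof.
move=> uL dL q1 dP dE cP hPE l dl Pl lE.
set LP := filter (fun m => (P <= m)%VS) L.
have [v vl vP] : exists2 v, v \in l & v \notin P by apply: vec_out; rewrite dl dP.
have hLP m : m \in LP -> [/\ m \in L, (P <= m)%VS, (m <= E)%VS & \dim m = 2%N].
  by rewrite mem_filter => /andP[Pm mL]; split; rewrite ?dL ?hPE.
case: (boolP (has (fun m : {vspace 'rV[F]_(n.+1)} => v \in m) LP)) => [/hasP [m mLP vm]|].
  have [mL Pm mE dm] := hLP m mLP.
  have sP : (P <= l :&: m)%VS by rewrite subv_cap Pl Pm.
  have d2 : (2 <= \dim (l :&: m))%N.
    rewrite ltnNge; apply/negP => h.
    have e : P = (l :&: m)%VS by apply: subv_eq_dim; rewrite // dP.
    by move: vP; rewrite e memv_cap vl vm.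
  have e1 : (l :&: m)%VS = l by apply: subv_eq_dim; rewrite ?capvSl ?dl.
  have e2 : (l :&: m)%VS = m by apply: subv_eq_dim; rewrite ?capvSr ?dm.
  by rewrite -e1 e2.
move/hasPn => nv; exfalso.
set U0 := (P + <[v]>)%VS.
have v0 : v != 0%R by apply/eqP => e; move: vP; rewrite e mem0v.
have dv : \dim <[v]> = 1%N by rewrite dim_vline v0.
have dU0 : \dim U0 = 2%N.
  case: (cap_point P dv) => [h|h].
    by move: vP; rewrite memvE h.
  by rewrite /U0 (dim_sum_eq (c := 0)) ?dP ?dv // capvC h dimv0.
have vU0 : v \in U0 by rewrite /U0 memvE addvSr.
have PU0 : (P <= U0)%VS by rewrite addvSl.
have U0E : (U0 <= E)%VS by rewrite subv_add (subv_trans Pl lE) -memvE (subvP lE).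
have H1 : forall U, U \in U0 :: LP -> [/\ (P <= U)%VS, (U <= E)%VS & \dim U = 2%N].
  move=> U; rewrite inE => /orP[/eqP->|/hLP [] _ ? ? ?] //.
have H2 : pairwise (fun U U' => (U :&: U' <= P)%VS) (U0 :: LP).
  change (all (fun U' => (U0 :&: U' <= P)%VS) LP && pairwise (fun U U' => (U :&: U' <= P)%VS) LP).
  apply/andP; split.
    apply/allP => m mLP; have [mL Pm mE dm] := hLP m mLP.
    rewrite (I2 PU0 Pm) ?dU0 ?dm ?dP //.
    by apply/eqP => e; move: (nv m mLP); rewrite -e vU0.
  apply: pw_of_uniq; first exact: filter_uniq.
  move=> a b aLP bLP nab; have [_ Pa _ da] := hLP a aLP; have [_ Pb _ db] := hLP b bLP.
  by rewrite (I2 Pa Pb) ?da ?db ?dP.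
have := union_bound (subv_trans Pl lE) H1 H2.
rewrite dP dE /= size_filter -/(nlines_through L P) cP.
set q := #|F|.
move: q1; rewrite expn1.
have -> : (q ^ 2 = q * q)%N by rewrite expnS expn1.
have -> : (q ^ 3 = q * q * q)%N by rewrite !expnS expn0 muln1 mulnA.
nia.
Qed.

Definition PP {F : fieldType} {vT : vectType F} (L : seq {vspace vT}) q (M Z EZ : {vspace vT}) :=
  [/\ \dim EZ = 3%N, nlines_in L EZ = q.+1,
     (forall l, l \in L -> (Z <= l)%VS -> (l <= EZ)%VS),
     (forall l, l \in L -> (l <= EZ)%VS -> (Z <= l)%VS) & (EZ <= M)%VS].

Lemma qM_plane {F : fieldType} {vT : vectType F} (L : seq {vspace vT}) q (M Z : {vspace vT}) :
  uniq L -> (forall l, l \in L -> \dim l = 2%N) ->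
  (forall X : {vspace vT}, \dim X = 1%N ->
     nlines_through L X = 0%N \/ nlines_through L X = q.+1) ->
  (forall E : {vspace vT}, \dim E = 3%N ->
     [\/ nlines_in L E = 0%N, nlines_in L E = 1%N | nlines_in L E = q.+1]) ->
  (forall S : {vspace vT}, \dim S = 4%N ->
     [\/ nlines_in L S = 0%N, nlines_in L S = 1%N, nlines_in L S = q.+1
       | nlines_in L S = (2 * q).+1]) ->
  (1 < q)%N -> qM_point q L M Z -> exists EZ, PP L q M Z EZ.
Proof.
move=> uL dL Pt Pl Sd q1 hZ.
have [cZ ZM] := qM_full Pt hZ.
have [E [dE cE h1 h2 h3]] := plane_lemma uL dL Pl Sd q1 hZ.1 cZ.
by exists E; split => //; apply: h3.
Qed.

Lemma Sol {F : fieldType} {vT : vectType F} (A B k : {vspace vT}) :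
  \dim A = 3%N -> \dim B = 3%N -> A != B -> \dim k = 2%N -> (k <= A)%VS -> (k <= B)%VS ->
  \dim (A + B) = 4%N.
Proof.
move=> dA dB nAB dk kA kB.
have h1 : (2 <= \dim (A :&: B))%N by rewrite -dk dimvS // subv_cap kA kB.
have h2 := dim_cap_lt (etrans dA (esym dB)) nAB.
have e : \dim (A :&: B) = 2%N by rewrite dA in h2; lia.
by rewrite (dim_sum_eq e) dA dB.
Qed.

Lemma pts_lines {F : fieldType} {vT : vectType F} (P Z1 Z2 k1 k2 : {vspace vT}) :
  \dim P = 1%N -> \dim Z1 = 1%N -> \dim k1 = 2%N -> \dim k2 = 2%N ->
  (P <= k1)%VS -> (P <= k2)%VS -> k1 != k2 -> (Z1 <= k1)%VS -> (Z2 <= k2)%VS ->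
  Z1 != P -> Z1 != Z2.
Proof.
move=> dP dZ d1 d2 P1 P2 n12 Z1k Z2k nZP; apply/eqP => e.
have ec : (k1 :&: k2)%VS = P by apply: I2; rewrite ?d1 ?d2 ?dP.
have : (Z1 <= P)%VS by rewrite -ec subv_cap Z1k e.
by move/subv_eq_dim => /(_ _) h; move/eqP: nZP; apply; apply: h; rewrite dP dZ.
Qed.

Lemma Sep {F : fieldType} {vT : vectType F} (L : seq {vspace vT}) q (M P E Z1 Z2 B C k1 k2 : {vspace vT}) :
  uniq L -> (forall l, l \in L -> \dim l = 2%N) ->
  (forall X : {vspace vT}, \dim X = 1%N ->
     nlines_through L X = 0%N \/ nlines_through L X = q.+1) ->
  (forall S : {vspace vT}, \dim S = 4%N ->
     [\/ nlines_in L S = 0%N, nlines_in L S = 1%N, nlines_in L S = q.+1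
       | nlines_in L S = (2 * q).+1]) ->
  (1 < q)%N -> \dim P = 1%N -> nlines_through L P = q.+1 ->
  \dim E = 3%N -> nlines_in L E = q.+1 ->
  (forall l, l \in L -> (P <= l)%VS -> (l <= E)%VS) ->
  qM_point q L M Z1 -> qM_point q L M Z2 -> Z1 != Z2 -> Z1 != P -> Z2 != P ->
  PP L q M Z1 B -> PP L q M Z2 C ->
  k1 \in L -> (P <= k1)%VS -> (Z1 <= k1)%VS ->
  k2 \in L -> (P <= k2)%VS -> (Z2 <= k2)%VS ->
  [/\ E != B, \dim (E + B) = 4%N & (E + B)%VS != (E + C)%VS].
Proof.
move=> uL dL Pt Sd q1 dP cP dE cE hPE hZ1 hZ2 n12 n1P n2P [dB cB B1 B2 BM] [dC cC C1 C2 CM] k1L Pk1 Zk1 k2L Pk2 Zk2.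
have q0 : (0 < q)%N by lia.
have [cZ1 _] := qM_full Pt hZ1.
have nEB : E != B.
  apply/eqP => e; apply: (DP uL dL dP hZ1.1 _ cP q0 (E := B)) => //.
    by rewrite eq_sym.
  by move=> l lL Pl; rewrite -e hPE.
have nEC : E != C.
  apply/eqP => e; apply: (DP uL dL dP hZ2.1 _ cP q0 (E := C)) => //.
    by rewrite eq_sym.
  by move=> l lL Pl; rewrite -e hPE.
have nBC : B != C.
  apply/eqP => e; apply: (DP uL dL hZ1.1 hZ2.1 n12 cZ1 q0 (E := C)) => //.
  by move=> l lL Zl; rewrite -e B1.
have dS : \dim (E + B) = 4%N.
  by apply: (Sol dE dB nEB (dL k1 k1L)); rewrite ?hPE ?B1.
split => //; apply/eqP => e.
apply: (K3 uL dL Sd q1 dE dB dC dS cE cB cC nEB nEC nBC); rewrite ?addvSl ?addvSr //.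
by rewrite e addvSr.
Qed.

Lemma main_contra (F : finFieldType) n (L : seq {vspace 'rV[F]_(n.+1)})
  (M P E l X Y : {vspace 'rV[F]_(n.+1)}) :
  uniq L -> (forall l, l \in L -> \dim l = 2%N) ->
  (forall X : {vspace 'rV[F]_(n.+1)}, \dim X = 1%N ->
     nlines_through L X = 0%N \/ nlines_through L X = (#|F|).+1) ->
  (forall E : {vspace 'rV[F]_(n.+1)}, \dim E = 3%N ->
     [\/ nlines_in L E = 0%N, nlines_in L E = 1%N | nlines_in L E = (#|F|).+1]) ->
  (forall S : {vspace 'rV[F]_(n.+1)}, \dim S = 4%N ->
     [\/ nlines_in L S = 0%N, nlines_in L S = 1%N, nlines_in L S = (#|F|).+1
       | nlines_in L S = (2 * #|F|).+1]) ->
  (1 < #|F|)%N -> \dim M = 5%N -> \dim P = 1%N -> nlines_through L P = (#|F|).+1 ->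
  \dim E = 3%N -> nlines_in L E = (#|F|).+1 ->
  (forall l, l \in L -> (P <= l)%VS -> (l <= E)%VS) -> (E <= M)%VS ->
  \dim l = 2%N -> (P <= l)%VS -> (l <= E)%VS ->
  qM_point #|F| L M X -> qM_point #|F| L M Y -> X != Y -> X != P -> Y != P ->
  (X <= l)%VS -> (Y <= l)%VS ->
  (forall m : {vspace 'rV[F]_(n.+1)}, \dim m = 2%N -> (P <= m)%VS -> (m <= E)%VS ->
     exists W, [/\ (W <= m)%VS, qM_point #|F| L M W & W <> P]) ->
  False.
Proof.
move=> uL dL Pt Pl Sd q1 dM dP cP dE cE hPE EM dl Pl_ lE hX hY nXY nXP nYP Xl Yl hex.
have lL := cover_lines uL dL q1 dP dE cP hPE dl Pl_ lE.
have [EX PX] := qM_plane uL dL Pt Pl Sd q1 hX.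
have [EY PY] := qM_plane uL dL Pt Pl Sd q1 hY.
set LP' := filter (fun m => (P <= m)%VS && (m != l)) L.
have hm : forall m, m \in LP' -> [/\ m \in L, (P <= m)%VS, (m <= E)%VS, \dim m = 2%N & m != l].
  move=> m; rewrite mem_filter => /andP[/andP[Pm nml] mL].
  by split => //; rewrite ?dL ?hPE.
pose Good (m EW : {vspace 'rV[F]_(n.+1)}) :=
  exists W, [/\ (W <= m)%VS, qM_point #|F| L M W, W != P & PP L #|F| M W EW].
have exG : forall m, m \in LP' -> exists EW, Good m EW.
  move=> m mLP; have [mL Pm mE dm nml] := hm m mLP.
  have [W [Wm hW nWP]] := hex m dm Pm mE.
  have [EW PW] := qM_plane uL dL Pt Pl Sd q1 hW.
  by exists EW, W; split => //; apply/eqP.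
pose EWf m := epsilon (inhabits 0%VS) (Good m).
have GT : forall m, m \in LP' -> Good m (EWf m).
  by move=> m mLP; apply: epsilon_spec; apply: exG.
pose T m := (E + EWf m)%VS.
have SepXY := Sep uL dL Pt Sd q1 dP cP dE cE hPE hX hY nXY nXP nYP PX PY lL Pl_ Xl lL Pl_ Yl.
have SepYX := Sep uL dL Pt Sd q1 dP cP dE cE hPE hY hX _ nYP nXP PY PX lL Pl_ Yl lL Pl_ Xl.
have [nEX dSX nSXY] := SepXY.
have [nEY dSY _] := SepYX (ltac:(by rewrite eq_sym)).
have hT : forall m, m \in LP' -> [/\ \dim (T m) = 4%N, T m != (E + EX)%VS & T m != (E + EY)%VS].
  move=> m mLP; have [mL Pm mE dm nml] := hm m mLP.
  have [W [Wm hW nWP PW]] := GT m mLP.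
  have nWX : W != X.
    by apply: (pts_lines dP hW.1 dm dl Pm Pl_ nml Wm Xl nWP).
  have nWY : W != Y.
    by apply: (pts_lines dP hW.1 dm dl Pm Pl_ nml Wm Yl nWP).
  have [_ d1 n1] := Sep uL dL Pt Sd q1 dP cP dE cE hPE hW hX nWX nWP nXP PW PX mL Pm Wm lL Pl_ Xl.
  have [_ _ n2] := Sep uL dL Pt Sd q1 dP cP dE cE hPE hW hY nWY nWP nYP PW PY mL Pm Wm lL Pl_ Yl.
  by split.
have hTT : forall m m', m \in LP' -> m' \in LP' -> m != m' -> T m != T m'.
  move=> m m' mLP m'LP nmm.
  have [mL Pm mE dm nml] := hm m mLP; have [m'L Pm' m'E dm' nml'] := hm m' m'LP.
  have [W [Wm hW nWP PW]] := GT m mLP; have [W' [Wm' hW' nWP' PW']] := GT m' m'LP.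
  have nWW : W != W' by apply: (pts_lines dP hW.1 dm dm' Pm Pm' nmm Wm Wm' nWP).
  by have [_ _ ->] := Sep uL dL Pt Sd q1 dP cP dE cE hPE hW hW' nWW nWP nWP' PW PW' mL Pm Wm m'L Pm' Wm'.
have rI : forall U U', (E <= U)%VS -> (E <= U')%VS -> \dim U = 4%N -> \dim U' = 4%N -> U != U' ->
    (U :&: U' <= E)%VS.
  by move=> U U' EU EU' dU dU' nU; rewrite (I2 EU EU') ?dE ?subvv.
have TM : forall m, m \in LP' -> (T m <= M)%VS.
  by move=> m mLP; have [W [_ _ _ [_ _ _ _ EWM]]] := GT m mLP; rewrite /T subv_add EM EWM.
set s := [:: (E + EX)%VS, (E + EY)%VS & map T LP'].
have H1 : forall U, U \in s -> [/\ (E <= U)%VS, (U <= M)%VS & \dim U = 4%N].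
  move=> U; rewrite !inE => /or3P[/eqP->|/eqP->|/mapP[m mLP ->]].
  - by split; rewrite ?addvSl // subv_add EM; case: PX.
  - by split; rewrite ?addvSl // subv_add EM; case: PY.
  - by have [d1 _ _] := hT m mLP; split; rewrite ?addvSl ?TM.
have H2 : pairwise (fun U U' => (U :&: U' <= E)%VS) s.
  rewrite /s /= !all_map; apply/and3P; split.
  - apply/andP; split; first by apply: rI; rewrite ?addvSl.
    apply/allP => m mLP /=; have [d1 n1 _] := hT m mLP.
    by apply: rI; rewrite ?addvSl // eq_sym.
  - apply/allP => m mLP /=; have [d1 _ n1] := hT m mLP.
    by apply: rI; rewrite ?addvSl // eq_sym.
  - rewrite pairwise_map; apply: pw_of_uniq; first exact: filter_uniq.
    move=> a b aLP bLP nab; have [da _ _] := hT a aLP; have [db _ _] := hT b bLP.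
    by apply: rI; rewrite ?addvSl ?hTT.
have := union_bound EM H1 H2.
have -> : size s = (#|F|).+2.
  rewrite /s /= size_map size_filter.
  have := count_split (fun m => (P <= m)%VS) (fun m => m != l) L.
  move=> h; have := cP; rewrite /nlines_through h => {h}.
  have h1 : count (fun m => (P <= m)%VS && ~~ (m != l)) L = 1%N.
    rewrite (@eq_in_count _ _ (pred1 l)); first by rewrite count_uniq_mem // lL.
    move=> m mL; rewrite negbK /=; case: (boolP (m == l)) => [/eqP->|_]; first by rewrite Pl_.
    by rewrite andbF.
  by rewrite [X in _ + X = _]h1 addn1 => -[->].
rewrite dE dM.
move: q1; set x := #|F|.
have -> : (x ^ 4 = x * x * x * x)%N by rewrite !expnS expn0 muln1 !mulnA.
have -> : (x ^ 5 = x * x * x * x * x)%N by rewrite !expnS expn0 muln1 !mulnA.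
have -> : (x ^ 3 = x * x * x)%N by rewrite !expnS expn0 muln1 !mulnA.
move=> h2 h3. clear -h2 h3. nia.
Qed.

Unset Implicit Arguments. Set Strict Implicit. Set Printing Implicit Defensive.

Theorem corollary1 (F : finFieldType) (n : nat)
    (L : seq {vspace 'rV[F]_(n.+1)}) :
  let q := #|F| in
  uniq L ->
  L != [::] ->
  (forall l, l \in L -> \dim l = 2%N) ->
  (* (Pt) *)
  (forall X : {vspace 'rV[F]_(n.+1)}, \dim X = 1%N ->
     nlines_through L X = 0%N \/ nlines_through L X = q.+1) ->
  (* (Pl) *)
  (forall E : {vspace 'rV[F]_(n.+1)}, \dim E = 3%N ->
     [\/ nlines_in L E = 0%N, nlines_in L E = 1%N | nlines_in L E = q.+1]) ->
  (* (Sd) *)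
  (forall S : {vspace 'rV[F]_(n.+1)}, \dim S = 4%N ->
     [\/ nlines_in L S = 0%N, nlines_in L S = 1%N, nlines_in L S = q.+1
       | nlines_in L S = (2 * q).+1]) ->
  (* (To) *)
  (size L <= q ^ 5 + q ^ 4 + q ^ 3 + q ^ 2 + q + 1)%N ->
  forall M P : {vspace 'rV[F]_(n.+1)},
  \dim M = 5%N ->
  qM_point q L M P ->
  (* (a) *)
  (forall l : {vspace 'rV[F]_(n.+1)}, \dim l = 2%N ->
     (P <= l)%VS -> (l <= span_lines_through L P)%VS ->
     exists X, [/\ X <> P, (X <= l)%VS, qM_point q L M X &
       forall Y, Y <> P -> (Y <= l)%VS -> qM_point q L M Y -> Y = X])
  \/
  (* (b) *)
  (exists l : {vspace 'rV[F]_(n.+1)}, [/\ \dim l = 2%N, (P <= l)%VS,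
     (l <= span_lines_through L P)%VS &
     forall X, (X <= l)%VS -> qM_point q L M X -> X = P]).
Proof.
move=> q uL _ dL Pt Pl Sd _ M P dM hP.
have q1 : (1 < q)%N by rewrite /q; apply: finNzRing_gt1.
have [cP MP] := qM_full Pt hP.
have [E [dE cE hPE hEP minE]] := plane_lemma uL dL Pl Sd q1 hP.1 cP.
have EM := minE M MP.
have eS : span_lines_through L P = E.
  apply: subv_anti; apply/andP; split.
    rewrite /span_lines_through big_seq_cond.
    apply: (big_ind (fun U => (U <= E)%VS)); first exact: sub0v.
      by move=> U V hU hV; rewrite subv_add hU hV.
    by move=> i /andP[iL Pi]; apply: hPE.
  apply: minE => l lL Pl_.
  by rewrite /span_lines_through (big_rem l lL) Pl_ addvSl.
rewrite eS.
have [Hb|Hnb] := classic (exists l : {vspace 'rV[F]_(n.+1)}, [/\ \dim l = 2%N, (P <= l)%VS,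
     (l <= E)%VS & forall X, (X <= l)%VS -> qM_point q L M X -> X = P]).
  by right.
left => l dl Pl_ lE.
have hex : forall m : {vspace 'rV[F]_(n.+1)}, \dim m = 2%N -> (P <= m)%VS -> (m <= E)%VS ->
    exists W, [/\ (W <= m)%VS, qM_point #|F| L M W & W <> P].
  move=> m dm Pm mE; apply: NNPP => hn; apply: Hnb; exists m; split => // X Xm hX.
  by apply: NNPP => nXP; apply: hn; exists X; split.
have [X [Xl hX nXP]] := hex l dl Pl_ lE.
exists X; split => // Y nYP Yl hY.
apply: NNPP => nYX.
apply: (main_contra uL dL Pt Pl Sd q1 dM hP.1 cP dE cE hPE EM dl Pl_ lE hX hY _ _ _ Xl Yl hex).
- by apply/eqP => e; apply: nYX.
- by apply/eqP.
- by apply/eqP.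
Qed.
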